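(* For every positive integer $k$, as formal power series in $q$, $$\sum_{n\ge1}\mathrm{spt}k'_{do}(n)\,q^n=T_k(q)\,(q;q^2)_\infty+2q^k(q^2;q^2)_{k-1},$$ where $T_1(q)=-q$ and $T_k(q)=(q-q^{2k-1})T_{k-1}(q)-q^{2k-1}$ for $k>1$.
   Context: For a partition $\pi$, $s(\pi)$ is its smallest part. $\mathrm{Spt}k_{do}(n)$ is the set of partitions $\pi$ of $n$ in which $s(\pi)$ occurs exactly $k$ times and the remaining parts (those larger than $s(\pi)$) are pairwise distinct and each has parity different from that of $s(\pi)$. $B_0(k,n)$ (resp. $B_1(k,n)$) is the number of $\pi\in\mathrm{Spt}k_{do}(n)$ whose number of parts greater than $s(\pi)$ is even (resp. odd), and $\mathrm{spt}k'_{do}(n)=B_0(k,n)-B_1(k,n)$. Notation: $(a;q)_0=1$, $(a;q)_n=\prod_{j=0}^{n-1}(1-aq^j)$, $(a;q)_\infty=\prod_{j\ge0}(1-aq^j)$. *)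

(* Defs.v *)
From mathcomp Require Import all_boot all_order all_algebra.
Set Implicit Arguments. Unset Strict Implicit. Unset Printing Implicit Defensive.
Import GRing.Theory Num.Theory.
Local Open Scope ring_scope.

(* A partition of n is encoded by its multiplicity function:
   m i = number of times the part i occurs (1 <= i <= n).
   Each multiplicity is at most n, so m : {ffun 'I_n.+1 -> 'I_n.+1}. *)
Definition mults (n : nat) := {ffun 'I_n.+1 -> 'I_n.+1}.

Definition is_partition (n : nat) (m : mults n) : bool :=
  (nat_of_ord (m ord0) == 0)%N && (\sum_(i < n.+1) (i * m i)%N == n)%N.

Definition spt_do_at (k n : nat) (m : mults n) (s : 'I_n.+1) : bool :=
  [&& (0 < s)%N, (m s == k :> nat),
      [forall i : 'I_n.+1, (i < s)%N ==> (m i == 0 :> nat)] &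
      [forall i : 'I_n.+1, (s < i)%N ==>
          ((m i <= 1)%N && ((m i == 1 :> nat) ==> (odd i != odd s)))]].

Definition nlarger (n : nat) (m : mults n) (s : 'I_n.+1) : nat :=
  (\sum_(i < n.+1 | (s < i)%N) m i)%N.

Definition B0 (k n : nat) : nat :=
  #|[set m : mults n | is_partition m &&
      [exists s, spt_do_at k m s && ~~ odd (nlarger m s)]]|.
Definition B1 (k n : nat) : nat :=
  #|[set m : mults n | is_partition m &&
      [exists s, spt_do_at k m s && odd (nlarger m s)]]|.

Definition sptkdo' (k n : nat) : int := (B0 k n)%:Z - (B1 k n)%:Z.

(* T_1 = -q, T_k = (q - q^(2k-1)) T_(k-1) - q^(2k-1); T_0 is unused. *)
Fixpoint Tpoly (k : nat) : {poly int} :=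
  match k with
  | 0 => 0
  | 1 => - 'X
  | (j.+1) as k' => ('X - 'X^(2 * k' - 1)) * Tpoly j - 'X^(2 * k' - 1)
  end.

Definition poch_q_q2 (N : nat) : {poly int} := \prod_(j < N) (1 - 'X^(2 * j + 1)).
Definition poch_q2_q2 (N : nat) : {poly int} := \prod_(j < N) (1 - 'X^(2 * j + 2)).

(* Main.v *)
Require Import Defs.
From mathcomp Require Import all_boot all_order all_algebra.
From mathcomp Require Import ring zify.
Unset Implicit Arguments. Unset Strict Implicit. Unset Printing Implicit Defensive.
Import GRing.Theory Num.Theory.
Local Open Scope ring_scope.

Record eqm (N : nat) (p q : {poly int}) : Prop :=
  Eqm { eqmP : forall i, (i < N)%N -> p`_i = q`_i }.

Section Eqm.
Set Implicit Arguments.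
Variable N : nat.

Lemma eqm_refl p : eqm N p p. Proof. by []. Qed.
Lemma eqm_sym p q : eqm N p q -> eqm N q p. Proof. by case=> h; split=> i hi; rewrite h. Qed.
Lemma eqm_trans p q r : eqm N p q -> eqm N q r -> eqm N p r.
Proof. by case=> h1 [h2]; split=> i hi; rewrite h1 // h2. Qed.
Lemma eqm_eq p q : p = q -> eqm N p q. Proof. by move->. Qed.
Lemma eqmD p p' q q' : eqm N p p' -> eqm N q q' -> eqm N (p + q) (p' + q').
Proof. by case=> h1 [h2]; split=> i hi; rewrite !coefD h1 // h2. Qed.
Lemma eqmN p p' : eqm N p p' -> eqm N (- p) (- p').
Proof. by case=> h; split=> i hi; rewrite !coefN h. Qed.
Lemma eqmB p p' q q' : eqm N p p' -> eqm N q q' -> eqm N (p - q) (p' - q').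
Proof. by move=> h1 h2; apply: eqmD => //; apply: eqmN. Qed.
Lemma eqmMr p p' r : eqm N p p' -> eqm N (p * r) (p' * r).
Proof.
case=> h; split=> i hi; rewrite !coefM; apply: eq_bigr => j _; rewrite h //.
by apply: leq_ltn_trans hi; rewrite -ltnS.
Qed.
Lemma eqmMl p p' r : eqm N p p' -> eqm N (r * p) (r * p').
Proof. by move=> h; rewrite ![r * _]mulrC; apply: eqmMr. Qed.
Lemma eqmM p p' q q' : eqm N p p' -> eqm N q q' -> eqm N (p * q) (p' * q').
Proof. by move=> h1 h2; apply: eqm_trans (eqmMr _ h1) (eqmMl _ h2). Qed.
Lemma eqmX0 e r : (N <= e)%N -> eqm N ('X^e * r) 0.
Proof. move=> he; split=> i hi; rewrite coefXnM coef0 ifT //; lia. Qed.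
Lemma eqmX0' e : (N <= e)%N -> eqm N ('X^e) 0.
Proof. by move=> he; rewrite -(mulr1 'X^e); apply: eqmX0. Qed.
End Eqm.
Unset Implicit Arguments.

Definition H (t L : nat) : {poly int} :=
  \prod_(i < L) (if (t <= i)%N && (odd i == odd t) then 1 - 'X^i else 1).

Lemma H_ge t L : (L <= t)%N -> H t L = 1.
Proof.
move=> hL; apply: big1 => i _; rewrite ifF //.
by apply/negbTE; rewrite negb_and -ltnNge (leq_trans (ltn_ord i)) // ltnS.
Qed.

Lemma H_rec t L : (t < L)%N -> H t L = (1 - 'X^t) * H t.+2 L.
Proof.
move=> hL; rewrite -(subnKC hL); elim: (L - t.+1)%N => [|d IH].
  rewrite addn0 /H big_ord_recr /= -/(H t t) H_ge // mul1r leqnn eqxx /=.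
  by rewrite -/(H t.+2 t.+1) H_ge // mulr1.
rewrite /H addnS [in LHS]big_ord_recr [in RHS]big_ord_recr -/(H t (t.+1 + d)) -/(H t.+2 (t.+1 + d)) IH.
have -> : (t <= (@ord_max (t.+1 + d)))%N && (odd (@ord_max (t.+1 + d)) == odd t)
        = (t.+2 <= (@ord_max (t.+1 + d)))%N && (odd (@ord_max (t.+1 + d)) == odd t.+2).
  rewrite /= negbK.
  case: d {IH} => [|d]; first by rewrite !addn0; case: (odd t); rewrite !andbF.
  have -> : (t <= t.+1 + d.+1)%N by lia.
  by have -> : (t.+1 < t.+1 + d.+1)%N by lia.
by rewrite mulrA.
Qed.

Lemma H_trunc t N L : (N <= L)%N -> eqm N (H t L) (H t N).
Proof.
move=> hL; rewrite -(subnKC hL); elim: (L - N)%N => [|d IH].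
  by rewrite addn0; apply: eqm_refl.
rewrite /H addnS big_ord_recr -/(H t (N + d)).
apply: eqm_trans (_ : eqm N (H t (N + d) * 1) _); last by rewrite mulr1.
apply: eqmM => //; case: ifP => _; last exact: eqm_refl.
rewrite -[1 in X in eqm _ _ X]subr0; apply: eqmB; first exact: eqm_refl.
apply: eqmX0'; exact: leq_addr.
Qed.

Lemma H0 L : (0 < L)%N -> H 0 L = 0.
Proof. by case: L => // L _; rewrite /H big_ord_recl /= expr0 subrr mul0r. Qed.

Lemma poch_H M : poch_q_q2 M = H 1 (2 * M).
Proof.
elim: M => [|M IH]; first by rewrite /poch_q_q2 /H muln0 !big_ord0.
rewrite /poch_q_q2 big_ord_recr /= -/(poch_q_q2 M) IH.
rewrite /H mulnS !addSn add0n !big_ord_recr /= -/(H 1 (2 * M)).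
by rewrite oddM /= andbF mulr1 addn1.
Qed.

Lemma GR N t : eqm N (H t N) ((1 - 'X^t) * H t.+2 N).
Proof.
case: (ltnP t N) => h; first by apply: eqm_eq; apply: H_rec.
rewrite !H_ge ?mulr1; [|lia|lia].
rewrite -[1 in X in eqm _ X _]subr0; apply: eqmB; first exact: eqm_refl.
by apply: eqm_sym; apply: eqmX0'.
Qed.

Definition S N k M : {poly int} := \sum_(s < M) 'X^(k * s.+1) * H s.+2 N.

Lemma S1 N : (0 < N)%N -> forall M, eqm N (S N 1 M) ('X * (H M.+1 N + H M N - H 1 N)).
Proof.
move=> hN; elim=> [|M IH].
  by apply: eqm_eq; rewrite /S big_ord0 H0 // addr0 subrr mulr0.
rewrite /S big_ord_recr -/(S N 1 M) /=.
refine (eqm_trans (eqmD IH (eqm_refl _ _)) _).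
refine (eqm_trans (eqmD (eqmMl 'X (eqmB (eqmD (eqm_refl _ _) (GR N M)) (eqm_refl _ _))) (eqm_refl _ _)) _).
apply: eqm_eq; rewrite mul1n exprS; ring.
Qed.

Lemma S_succ N k M : S N k M.+1 = S N k M + 'X^(k*M.+1) * H M.+2 N.
Proof. by rewrite /S big_ord_recr. Qed.

Lemma Srec N k P : eqm N (S N k.+1 P.+2)
  ('X * S N k P.+2 - 'X^(2*k+1) * S N k P - 'X^(2*k+1) * H 1 N).
Proof.
elim: P => [|P IH].
  rewrite /S !big_ord_recr !big_ord0 /=.
  refine (eqm_trans _ (eqmB (eqm_refl _ _) (eqmMl _ (eqm_sym (GR N 1))))).
  apply: eqm_eq.
  rewrite (_ : (k.+1 * 1 = k + 1)%N); last lia.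
  rewrite (_ : (k.+1 * 2 = k + k + 1 + 1)%N); last lia.
  rewrite (_ : (k * 1 = k)%N); last lia.
  rewrite (_ : (k * 2 = k + k)%N); last lia.
  rewrite (_ : (2 * k + 1 = k + k + 1)%N); last lia.
  rewrite !exprD !expr1; ring.
rewrite (S_succ N k.+1 P.+2) (S_succ N k P.+2) (S_succ N k P).
refine (eqm_trans (eqmD IH (eqm_refl _ _)) _).
refine (eqm_trans _ (eqmB (eqmB (eqm_refl _ _) (eqmMl _ (eqmD (eqm_refl _ _) (eqmMl _ (eqm_sym (GR N P.+2)))))) (eqm_refl _ _))).
apply: eqm_eq.
rewrite (_ : (k.+1 * P.+3 = k * P.+1 + k + k + P.+2 + 1)%N); last nia.
rewrite (_ : (k * P.+3 = k * P.+1 + k + k)%N); last nia.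
rewrite (_ : (2 * k + 1 = k + k + 1)%N); last lia.
rewrite !exprD !expr1; ring.
Qed.

Lemma S_ext N k M : (0 < k)%N -> (N <= M)%N -> eqm N (S N k M) (S N k N).
Proof.
move=> hk hM; rewrite -(subnKC hM); elim: (M - N)%N => [|d IH].
  by rewrite addn0; apply: eqm_refl.
rewrite addnS S_succ.
rewrite -[S N k N]addr0; apply: eqmD => //; apply: eqmX0; nia.
Qed.

Lemma S_small N k M : (N <= k)%N -> eqm N (S N k M) 0.
Proof.
move=> hk; elim: M => [|M IH]; first by rewrite /S big_ord0; apply: eqm_refl.
rewrite S_succ -[0]addr0; apply: eqmD => //; apply: eqmX0; nia.
Qed.

Lemma Smain N : (0 < N)%N -> forall k,
  eqm N (S N k.+1 N) (Tpoly k.+1 * H 1 N + 2%:P * 'X^(k.+1) * poch_q2_q2 k).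
Proof.
move=> hN; elim=> [|k IH].
  refine (eqm_trans (S1 N hN N) _).
  rewrite (H_ge N.+1 N (leqnSn N)) (H_ge N N (leqnn N)).
  apply: eqm_eq; rewrite /poch_q2_q2 big_ord0 /= polyC_natr; ring.
refine (eqm_trans (eqm_sym (S_ext N k.+2 N.+2 _ _)) _); [done|lia|].
refine (eqm_trans (Srec N k.+1 N) _).
refine (eqm_trans (eqmB (eqmB (eqmMl _ (S_ext N k.+1 N.+2 _ _)) (eqm_refl _ _)) (eqm_refl _ _)) _); [done|lia|].
refine (eqm_trans (eqmB (eqmB (eqmMl _ IH) (eqmMl _ IH)) (eqm_refl _ _)) _).
apply: eqm_eq.
have E : Tpoly k.+2 = ('X - 'X^(2*k.+2-1)) * Tpoly k.+1 - 'X^(2*k.+2-1) by [].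
rewrite E; move: (Tpoly k.+1) => T.
rewrite /poch_q2_q2 big_ord_recr /= -/(poch_q2_q2 k).
rewrite (_ : (2 * k.+2 - 1 = k + k + 2 + 1)%N); last lia.
rewrite (_ : (2 * k.+1 + 1 = k + k + 2 + 1)%N); last lia.
rewrite (_ : (2 * k + 2 = k + k + 2)%N); last lia.
rewrite !exprD !exprS !expr0; ring.
Qed.

Lemma card_set_sum (T : finType) (P : pred T) :
  (#|[set x | P x]| : int) = \sum_x (P x)%:R.
Proof.
rewrite -sum1_card -natz natr_sum big_mkcond /=.
by apply: eq_bigr => x _; rewrite inE; case: (P x).
Qed.

Lemma spt_uniq k n (m : mults n) (s s' : 'I_n.+1) : (0 < k)%N ->
  spt_do_at k m s -> spt_do_at k m s' -> s = s'.
Proof.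
move=> hk /and4P [s0 /eqP ms /forallP fs _] /and4P [s0' /eqP ms' /forallP fs' _].
case: (ltngtP s s') => h.
- by move: (fs' s); rewrite h /= ms => /eqP k0; move: hk; rewrite k0.
- by move: (fs s'); rewrite h /= ms' => /eqP k0; move: hk; rewrite k0.
- exact: val_inj.
Qed.
Arguments spt_uniq {k n m s s'}.

Lemma C1 k n : (0 < k)%N -> sptkdo' k n =
  \sum_(m : mults n) \sum_(s < n.+1)
     ((is_partition m && spt_do_at k m s)%:R * (-1)^+(nlarger m s)).
Proof.
move=> hk; rewrite /sptkdo' /B0 /B1 !card_set_sum -sumrB.
apply: eq_bigr => m _.
case: (boolP [exists s, spt_do_at k m s]) => [/existsP [s0 hs0]|hno].
  rewrite (bigD1 s0) //= big1 ?addr0; last first.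
    move=> s hs; case: (boolP (spt_do_at k m s)) => h; last by rewrite andbF mul0r.
    by move: hs; rewrite (spt_uniq hk h hs0) eqxx.
  have E0 : [exists s, spt_do_at k m s && ~~ odd (nlarger m s)] = ~~ odd (nlarger m s0).
    apply/existsP/idP => [[s /andP [hs ho]]|ho]; first by rewrite -(spt_uniq hk hs hs0).
    by exists s0; rewrite hs0.
  have E1 : [exists s, spt_do_at k m s && odd (nlarger m s)] = odd (nlarger m s0).
    apply/existsP/idP => [[s /andP [hs ho]]|ho]; first by rewrite -(spt_uniq hk hs hs0).
    by exists s0; rewrite hs0.
  rewrite E0 E1 hs0 andbT -signr_odd.
  by case: (is_partition m); case: (odd (nlarger m s0)) => //=; rewrite expr1.
have E0 : forall b : 'I_n.+1 -> bool, [exists s, spt_do_at k m s && b s] = false.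
  move=> b; apply/negbTE; apply: contra hno => /existsP [s /andP [hs _]].
  by apply/existsP; exists s.
rewrite (E0 (fun s => ~~ odd (nlarger m s))) (E0 (fun s => odd (nlarger m s))) andbF subrr big1 // => s _.
suff -> : spt_do_at k m s = false by rewrite andbF mul0r.
by apply/negbTE; apply: contra hno => hs; apply/existsP; exists s.
Qed.

Definition cc (k s i j : nat) : bool :=
  [&& (i == 0%N) ==> (j == 0%N), (i < s)%N ==> (j == 0%N),
      (i == s) ==> ((j == k) && (0 < s)%N) &
      (s < i)%N ==> ((j <= 1)%N && ((j == 1%N) ==> (odd i != odd s)))].

Lemma cP k n (m : mults n) (s : 'I_n.+1) :
  (nat_of_ord (m ord0) == 0%N) && spt_do_at k m s = [forall i : 'I_n.+1, cc k s i (m i)].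
Proof.
apply/andP/forallP => [[/eqP m0 /and4P [s0 /eqP ms /forallP f1 /forallP f2]] i|h].
  rewrite /cc; apply/and4P; split.
  - by apply/implyP => /eqP i0; rewrite (_ : i = ord0) ?m0 //; apply: val_inj.
  - exact: f1.
  - by apply/implyP => /eqP iS; rewrite (_ : i = s) ?ms ?eqxx ?s0 //; apply: val_inj.
  - exact: f2.
have hs := h s; rewrite /cc eqxx ltnn /= andbT in hs.
case/andP: hs => _ /andP [/eqP ms s0].
split; first by move: (h ord0); rewrite /cc eqxx /= => /andP [->].
apply/and4P; split => //; first by rewrite ms.
- by apply/forallP => i; move: (h i); rewrite /cc => /and4P [].
- by apply/forallP => i; move: (h i); rewrite /cc => /and4P [].
Qed.

Definition ww (k s i j : nat) : {poly int} :=
  if cc k s i j then (-1)^+((s < i)%N * j) * 'X^(i * j) else 0.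

Lemma prod_w k n (m : mults n) (s : 'I_n.+1) :
  \prod_(i < n.+1) ww k s i (m i) =
  if [forall i : 'I_n.+1, cc k s i (m i)]
  then (-1)^+(nlarger m s) * 'X^(\sum_(i < n.+1) (i * m i)%N) else 0.
Proof.
case: ifP => h.
  rewrite (eq_bigr (fun i : 'I_n.+1 => (-1)^+((s < i)%N * m i) * 'X^(i * m i))); last first.
    by move=> i _; rewrite /ww (forallP h i).
  rewrite big_split /= !prodrXr /nlarger [X in _ = (-1) ^+ X * _]big_mkcond /=.
  congr (_ ^+ _ * _); apply: eq_bigr => i _; by case: (s < i)%N; rewrite ?mul1n ?mul0n.
move/negbT/forallPn: h => [i hi].
by rewrite (bigD1 i) //= /ww (negbTE hi) mul0r.
Qed.

Lemma per_m k n (m : mults n) (s : 'I_n.+1) :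
  (is_partition m && spt_do_at k m s)%:R * (-1)^+(nlarger m s)
  = (\prod_(i < n.+1) ww k s i (m i))`_n.
Proof.
rewrite prod_w -cP /is_partition -andbA [(_ == n)%N && _]andbC andbA.
case: ((nat_of_ord (m ord0) == 0%N) && spt_do_at k m s); last by rewrite /= mul0r coef0.
rewrite /= -signr_odd -[in RHS]signr_odd.
by case: (odd (nlarger m s)); rewrite ?expr1 ?expr0 ?mulN1r ?mulrN1 ?mul1r ?mulr1 ?coefN coefXn eq_sym.
Qed.

Definition ff (k n s i : nat) : {poly int} :=
  (if i == s then ((0 < s)%N && (k < n.+1)%N)%:R * 'X^(s * k) else 1) *
  (if (s.+1 <= i)%N && (odd i == odd s.+1) then 1 - 'X^i else 1).

Lemma sum_w k n (s i : 'I_n.+1) : (0 < n)%N ->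
  \sum_(j < n.+1) ww k s i j = ff k n s i.
Proof.
move=> hn; case: (ltngtP i s) => h.
- have e1 : (i == s :> nat) = false by apply/eqP; lia.
  have e2 : (s < i)%N = false by lia.
  have e3 : (s.+1 <= i)%N = false by lia.
  rewrite /ff e1 e3 mulr1 big_ord_recl big1 ?addr0.
    by rewrite /ww /cc e1 e2 h /= implybT /= mul0n muln0 !expr0 mulr1.
  move=> j _; rewrite /ww /cc e1 e2 h /=.
  by rewrite andbF.
- have e1 : (i == s :> nat) = false by apply/eqP; lia.
  have e2 : (i < s)%N = false by lia.
  have e3 : (nat_of_ord i == 0%N) = false by apply/eqP; lia.
  rewrite /ff e1 h mul1r /=.
  case: n hn s i h e1 e2 e3 => [//|n] _ s i h e1 e2 e3.
  rewrite big_ord_recl big_ord_recl big1 ?addr0.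
    rewrite /ww /cc e1 e2 e3 h /= !muln0 !muln1 expr0 mulr1 expr1.
    by case: (odd i); case: (odd s); rewrite /= ?addr0 ?mulN1r.
  by move=> j _; rewrite /ww /cc e1 e2 e3 h /=.
- have {h} -> : i = s by apply: val_inj.
  rewrite /ff eqxx ltnn /= mulr1.
  have -> : \sum_(j < n.+1) ww k s s j = \sum_(j < n.+1) if (nat_of_ord j == k) && (0 < s)%N then 'X^(s * k) else 0.
    apply: eq_bigr => j _; rewrite /ww /cc eqxx ltnn /= andbT.
    case: (boolP (nat_of_ord j == k)) => /= [/eqP ->|_]; last by rewrite andbF.
    case: (boolP (0 < s)%N) => hs //=; last by rewrite andbF.
    have hs0 : (nat_of_ord s == 0%N) = false by apply/eqP; lia.
    by rewrite hs0 /= mul0n expr0 mul1r.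
  case: (boolP (0 < s)%N) => hs /=; last first.
    by rewrite mul0r big1 // => j _; rewrite andbF.
  case: (ltnP k n.+1) => hk /=.
    rewrite (bigD1 (Ordinal hk)) //= eqxx mul1r big1 ?addr0 // => j hj.
    rewrite andbT ifF //; apply/negbTE; move: hj; apply: contra => /eqP e.
    by apply/eqP/val_inj.
  rewrite mul0r big1 // => j _; rewrite ifF //; apply/negbTE.
  by apply/negP => /andP [/eqP e _]; move: (ltn_ord j); lia.
Qed.

Lemma prod_f k n (s : 'I_n.+1) :
  \prod_(i < n.+1) ff k n s i = ((0 < s)%N && (k < n.+1)%N)%:R * 'X^(s * k) * H s.+1 n.+1.
Proof.
rewrite /ff big_split /= -/(H s.+1 n.+1); congr (_ * _).
rewrite (bigD1 s) //= eqxx big1 ?mulr1 // => i hi.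
by rewrite ifF //; apply/negbTE; move: hi; apply: contra => /eqP e; apply/eqP/val_inj.
Qed.

Lemma comb k n : (0 < k)%N -> (0 < n)%N -> sptkdo' k n =
  (\sum_(s < n.+1) (((0 < s)%N && (k < n.+1)%N)%:R * 'X^(s * k) * H s.+1 n.+1))`_n.
Proof.
move=> hk hn; rewrite C1 // exchange_big coef_sum; apply: eq_bigr => s _.
under eq_bigr do rewrite per_m.
rewrite -coef_sum -prod_f.
rewrite (eq_bigr (fun i : 'I_n.+1 => \sum_(j < n.+1) ww k s i j)); last first.
  by move=> i _; rewrite sum_w.
by rewrite bigA_distr_bigA.
Qed.

Theorem theorem2 (k : nat) : (0 < k)%N ->
  forall n : nat,
    (if n == 0%N then 0 else sptkdo' k n) =
    (Tpoly k * poch_q_q2 n.+1)`_n + (2%:P * 'X^k * poch_q2_q2 k.-1)`_n.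
Proof.
move=> hk n; rewrite -coefD.
have hN : (0 < n.+1)%N by [].
have E1 : eqm n.+1 (Tpoly k * poch_q_q2 n.+1 + 2%:P * 'X^k * poch_q2_q2 k.-1)
                   (S n.+1 k n.+1).
  case: k hk => [//|k] _.
  refine (eqm_trans _ (eqm_sym (Smain n.+1 hN k))).
  apply: eqmD; last exact: eqm_refl.
  apply: eqmMl; rewrite poch_H; apply: H_trunc; lia.
rewrite (eqmP _ _ _ E1 n (ltnSn n)).
case: n hN E1 => [|n] _ _ /=.
  by rewrite /S big_ord_recl big_ord0 addr0 coefXnM ifT //; lia.
rewrite comb //.
have E2 : eqm n.+2
  (\sum_(s < n.+2) (((0 < s)%N && (k < n.+2)%N)%:R * 'X^(s * k) * H s.+1 n.+2))
  (S n.+2 k n.+1).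
  rewrite big_ord_recl /= mulr0n !mul0r add0r.
  case: (ltnP k n.+2) => hkn.
    apply: eqm_eq; rewrite /S; apply: eq_bigr => s _.
    by rewrite /= mul1r mulnC.
  refine (eqm_trans _ (eqm_sym (S_small _ _ _ hkn))).
  by apply: eqm_eq; apply: big1 => s _; rewrite /= mul0r mul0r.
rewrite (eqmP _ _ _ E2 n.+1 (ltnSn _)) (S_succ n.+2 k n.+1) coefD.
rewrite (_ : ('X^(k * n.+2) * H n.+3 n.+2)`_n.+1 = 0) ?addr0 //.
by rewrite coefXnM ifT //; nia.
Qed.
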